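(* $([-1,1],\oplus,-1,1)$, where $[-1,1]$ carries the Euclidean topology and $x\oplus y=\tfrac{x+y}{2}$, is a parametrised interval object in the category $\mathbf{Top}$ of topological spaces: for every space $P$, every midpoint-convex body $(A,m)$ in $\mathbf{Top}$ and all continuous $x_{-1},x_1\colon P\to A$ there is a unique continuous $h\colon P\times[-1,1]\to A$ with $h(p,-1)=x_{-1}(p)$, $h(p,1)=x_1(p)$ and $h(p,x\oplus y)=m(h(p,x),h(p,y))$.
   Context: In $\mathbf{Top}$ (products with product topology), a midpoint object is a space $A$ with continuous $m\colon A\times A\to A$ satisfying $m(x,x)=x$, $m(x,y)=m(y,x)$, $m(m(x,y),m(z,w))=m(m(x,z),m(y,w))$; cancellative if $m(x,y)=m(x,z)$ implies $y=z$; iterative if for every space $X$ and continuous $c\colon X\to A\times X$ there is a unique continuous $u\colon X\to A$ with $u=m\circ(\mathrm{id}_A\times u)\circ c$. A midpoint-convex body is a cancellative iterative midpoint object. *)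

(* Defs.v *)
From HB Require Import structures.
From mathcomp Require Import all_boot all_order all_algebra.
From mathcomp Require Import all_classical all_reals all_analysis.
From mathcomp Require Import lra.
Set Implicit Arguments. Unset Strict Implicit. Unset Printing Implicit Defensive.
Import Order.TTheory GRing.Theory Num.Theory.
Import numFieldNormedType.Exports.
Local Open Scope classical_set_scope.
Local Open Scope ring_scope.

Definition midpoint_object (A : topologicalType) (m : A -> A -> A) : Prop :=
  [/\ continuous (fun z : A * A => m z.1 z.2),
      (forall x : A, m x x = x),
      (forall x y : A, m x y = m y x) &
      (forall x y z w : A, m (m x y) (m z w) = m (m x z) (m y w))].

Definition cancellative (A : Type) (m : A -> A -> A) : Prop :=
  forall x y z : A, m x y = m x z -> y = z.

Definition iterative (A : topologicalType) (m : A -> A -> A) : Prop :=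
  forall (X : topologicalType) (c : X -> A * X), continuous c ->
    exists! u : X -> A,
      continuous u /\ u = (fun x => m (c x).1 (u (c x).2)).

Definition midpoint_convex_body (A : topologicalType) (m : A -> A -> A) : Prop :=
  [/\ midpoint_object m, cancellative m & iterative m].

(** The interval [-1,1] with the Euclidean (subspace) topology,
    as the subtype set_type `[-1,1] with the initial topology of the inclusion. *)
Notation Ipm1 R := (set_type (`[-1, 1]%classic : set R%type)).

Lemma Ipm1_m1P (R : realType) : ((-1 : R) \in (`[-1, 1]%classic : set R)).
Proof. by apply/mem_set; rewrite /= in_itv /=; apply/andP; split; lra. Qed.
Lemma Ipm1_1P (R : realType) : ((1 : R) \in (`[-1, 1]%classic : set R)).
Proof. by apply/mem_set; rewrite /= in_itv /=; apply/andP; split; lra. Qed.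

Definition Ineg1 (R : realType) : Ipm1 R := exist _ (-1) (Ipm1_m1P R).
Definition Ipos1 (R : realType) : Ipm1 R := exist _ 1 (Ipm1_1P R).

Lemma Imid_P (R : realType) (x y : Ipm1 R) :
  ((sval x + sval y) / 2 \in (`[-1, 1]%classic : set R)).
Proof.
case: x y => [x /set_mem/=] + [y /set_mem/=]; rewrite !in_itv /= => /andP[x1 x2] /andP[y1 y2].
by apply/mem_set; rewrite /= in_itv /=; apply/andP; split; lra.
Qed.

Definition Imid (R : realType) (x y : Ipm1 R) : Ipm1 R :=
  exist _ ((sval x + sval y) / 2) (Imid_P x y).

(* Main.v *)
Require Import Defs.
From HB Require Import structures.
From mathcomp Require Import all_boot all_order all_algebra.
From mathcomp Require Import all_classical all_reals all_analysis.
From mathcomp Require Import ring lra.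
Import numFieldNormedType.Exports.
Set Implicit Arguments. Unset Strict Implicit. Unset Printing Implicit Defensive.
Import Order.TTheory GRing.Theory Num.Theory.
Local Open Scope classical_set_scope.
Local Open Scope ring_scope.

Section Alg.
Variables (A : Type) (m : A -> A -> A).
Hypotheses (midem : forall x, m x x = x) (mcom : forall x y, m x y = m y x)
  (mmed : forall x y z w, m (m x y) (m z w) = m (m x z) (m y w)).

Definition W (a b : A) (n : nat) : A :=
  match n with
  | 0 => a
  | 1 => m (m a b) a
  | 2 => m a b
  | 3 => m (m a b) b
  | _ => b
  end.

Lemma W_step a b n E : (n <= 4)%N -> (E <= 4)%N -> (E <= 2 * n)%N -> (2 * n - E <= 4)%N ->
  W a b n = m (W a b E) (W a b (2 * n - E)%N).
Proof.
move=> hn hE h1 h2.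
have mm : forall x y, m (m (m x y) x) (m (m x y) y) = m x y.
  by move=> x y; rewrite mmed midem.
case: n hn h1 h2 => [|[|[|[|[|n]]]]] //= _;
case: E hE => [|[|[|[|[|E]]]]] //= _ _ _; rewrite ?midem //.
all: try by rewrite mcom.
all: try by rewrite mm.
all: try by rewrite mcom mm.
Qed.

Definition dg (a b : A) (s : bool) := if s then b else a.

Lemma C_eq a b (s t r : bool) :
  m (m (dg a b s) (dg a b t)) (W b a (s + t + 2 - 2 * r)%N) =
  m (dg a b r) (W a b (s + t + 2 - 2 * r)%N).
Proof.
have key : forall x y, m (m x y) (m (m x y) x) = m x (m (m x y) y).
  by move=> x y; rewrite -{4}[x]midem [in RHS]mmed [RHS]mcom (mcom x (m x y)).
have k1 := key a b; have k2 := key b a; rewrite (mcom b a) in k2.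
case: s; case: t; case: r => /=; rewrite ?midem ?(mcom b a) //.
all: try by rewrite mcom.
all: try by rewrite (mcom a b).
Qed.
End Alg.

Lemma loc_cont (Y Z : topologicalType) (K : Type) (k : Y -> K) (G : K -> Y -> Z)
  (g : Y -> Z) : (forall y, \forall y' \near y, k y' = k y) ->
  (forall c, continuous (G c)) -> (forall y, g y = G (k y) y) -> continuous g.
Proof.
move=> hk hG hg y.
have e : {near y, G (k y) =1 g}.
  by apply: filterS (hk y) => y' /= hy; rewrite hg hy.
apply: cvg_trans (near_eq_cvg e) _; rewrite (hg y); exact: hG.
Qed.

Lemma disc_near (Y : topologicalType) (D : discreteTopologicalType) (f : Y -> D) y :
  continuous f -> \forall y' \near y, f y' = f y.
Proof. by move=> hf; exact: (hf y _ (discrete_set1 (f y))). Qed.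

Lemma proj0_cont (i : nat) : continuous (fun s : cantor_space => s i).
Proof. exact: (@proj_continuous nat (fun _ => bool) i). Qed.

Definition tl (s : cantor_space) : cantor_space := fun i => s i.+1.

Lemma tl_cont : continuous tl.
Proof.
move=> s; apply/pointwise_cvgP => i.
exact: (@proj_continuous nat (fun _ => bool) i.+1).
Qed.

Section mcont.
Variables (A : topologicalType) (m : A -> A -> A).
Hypothesis mc : continuous (fun z : A * A => m z.1 z.2).
Lemma mcont (Y : topologicalType) (f g : Y -> A) : continuous f -> continuous g ->
  continuous (fun y => m (f y) (g y)).
Proof.
move=> hf hg y; have /= hm := @mc (f y, g y).
exact: (continuous2_cvg _ hm (hf y) (hg y)).
Qed.
End mcont.

Section Streams.
Variable R : realType.

Definition dd (b : bool) : R := if b then 1 else -1.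
Fixpoint Sn (n : nat) (s : cantor_space) : R :=
  match n with 0%N => 0 | n.+1 => (dd (s 0%N) + Sn n (tl s)) / 2 end.
Definition Rep (s : cantor_space) (x : R) := forall n, `|x - Sn n s| * 2 ^+ n <= 1.

Lemma step_id (x y : R) n : `|x - y / 2| * 2 ^+ n.+1 = `|2 * x - y| * 2 ^+ n.
Proof.
have -> : x - y / 2 = (2 * x - y) / 2 by field.
rewrite normrM exprS (@ger0_norm _ (2^-1)) ?invr_ge0 //.
by set u := `|_|; set v := 2 ^+ n; field.
Qed.

Lemma Rep_tl s x : Rep s x <-> Rep (tl s) (2 * x - dd (s 0%N)).
Proof.
split=> h n.
  by have := h n.+1; rewrite /= step_id opprD addrA.
case: n => [|n] /=.
  have := h 0%N; rewrite /= !expr0 !mulr1 !subr0 ler_norml => /andP[h1 h2].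
  rewrite ler_norml; case: (s 0%N) h1 h2 => /= h1 h2; apply/andP; split; lra.
by rewrite step_id opprD addrA; exact: h.
Qed.

Lemma Rep_bound s x : Rep s x -> `|x| <= 1.
Proof. by move=> /(_ 0%N); rewrite /= subr0 expr0 mulr1. Qed.

Lemma Sn_pre n s s' : (forall i, (i < n)%N -> s i = s' i) -> Sn n s = Sn n s'.
Proof.
elim: n s s' => [//|n IH] s s' h /=.
by rewrite h // (IH (tl s) (tl s')) // => i hi; apply: h.
Qed.

Definition fstep (y : R) : R := 2 * y - dd (0 <= y).
Definition str (y : R) : cantor_space := fun i => 0 <= iter i fstep y.

Lemma tl_str y : tl (str y) = str (fstep y).
Proof. by apply: funext => i; rewrite /tl /str iterSr. Qed.

Lemma fstep_bound y : `|y| <= 1 -> `|fstep y| <= 1.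
Proof.
rewrite /fstep; case: (lerP 0 y) => hy /=.
  rewrite ger0_norm // => h; rewrite ler_norml; apply/andP; split; lra.
rewrite ltr0_norm // => h; rewrite ler_norml; apply/andP; split; lra.
Qed.

Lemma Rep_ex x : `|x| <= 1 -> Rep (str x) x.
Proof.
move=> hx n; elim: n x hx => [|n IH] x hx /=.
  by rewrite subr0 expr0 mulr1.
rewrite step_id opprD addrA tl_str; exact: IH (fstep_bound hx).
Qed.


Lemma small (d : R) : 0 < d -> exists n, 2 < d * 2 ^+ n.
Proof.
move=> d0; have b0 : 0 <= 2 / d by rewrite divr_ge0 // ltW.
have := archi_boundP b0; set n := Num.bound _ => hn.
exists n; have : (n < 2 ^ n)%N by rewrite ltn_expl.
rewrite -(ltr_nat R) natrX => h2.
have : 2 / d < 2 ^+ n by apply: lt_trans hn h2.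
by rewrite ltr_pdivrMr // mulrC.
Qed.

Lemma Rep_uniq s x y : Rep s x -> Rep s y -> x = y.
Proof.
move=> hx hy; apply/eqP; rewrite -subr_eq0; apply/negPn/negP => hne.
have d0 : 0 < `|x - y| by rewrite normr_gt0.
have [n hn] := small d0.
have : `|x - y| * 2 ^+ n <= 2.
  have -> : x - y = (x - Sn n s) - (y - Sn n s) by rewrite opprB addrA subrK.
  apply: le_trans (_ : (`|x - Sn n s| + `|y - Sn n s|) * 2 ^+ n <= 2).
    by rewrite ler_wpM2r ?exprn_ge0 // (le_trans (ler_normB _ _)).
  by rewrite mulrDl; apply: le_trans (lerD (hx n) (hy n)) _; rewrite ?le_refl.
by move=> h; have := lt_le_trans hn h; rewrite ltxx.
Qed.

Definition ee (n : nat) : R := (2 ^+ n)^-1.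

Lemma Sn_bound n s : `|Sn n s| + ee n <= 1.
Proof.
rewrite /ee; elim: n s => [|n IH] s /=; first by rewrite normr0 expr0 invr1 add0r.
have := IH (tl s); set S := Sn n (tl s) => h.
have -> : (2 ^+ n.+1)^-1 = (2 ^+ n)^-1 / 2 :> R by rewrite exprS invfM mulrC.
rewrite normrM (@ger0_norm _ (2^-1)) ?invr_ge0 //.
have : `|dd (s 0%N) + S| <= 1 + `|S|.
  by apply: le_trans (ler_normD _ _) _; case: (s 0%N); rewrite /= ?normrN normr1.
set e := (2 ^+ n)^-1 in h *; set t := `|_ + _|; move=> h2; lra.
Qed.

Lemma ee_pos n : 0 < ee n.
Proof. by rewrite /ee invr_gt0 exprn_gt0. Qed.

Lemma ee_S n : ee n.+1 = ee n / 2.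
Proof. by rewrite /ee exprS invfM mulrC. Qed.

Lemma ee0 : ee 0 = 1.
Proof. by rewrite /ee expr0 invr1. Qed.

Lemma Sn_bound' n s : - 1 + ee n <= Sn n s /\ Sn n s <= 1 - ee n.
Proof.
have := Sn_bound n s; have := ler_norm (Sn n s); have := ler_norm (- Sn n s).
rewrite normrN; set S := Sn n s; set t := `|S|; set e := ee n; move=> *; split; lra.
Qed.

Lemma Sn_cross k n s : Sn k s - ee k <= Sn n s + ee n.
Proof.
elim: k n s => [|k IH] [|n] s.
- by rewrite /= ee0; lra.
- have := Sn_bound' n.+1 s; have := ee_pos n.+1; rewrite ee0 /=.
  set S := Sn n.+1 s; set e := ee n.+1; move=> *; lra.
- have := Sn_bound' k.+1 s; have := ee_pos k.+1; rewrite ee0 /=.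
  set S := Sn k.+1 s; set e := ee k.+1; move=> *; lra.
- have := IH n (tl s); rewrite [Sn k.+1 s]/= [Sn n.+1 s]/= !ee_S.
  set a := Sn k _; set b := Sn n _; set c := dd _; move=> *; lra.
Qed.

Definition val (s : cantor_space) : R := sup [set Sn n s - ee n | n in [set: nat]].

Lemma Rep_val s : Rep s (val s).
Proof.
move=> n; set E := [set Sn n s - ee n | n in [set: nat]].
have hs : has_sup E.
  split; first by exists (Sn 0 s - ee 0), 0%N.
  by exists (Sn 0 s + ee 0) => _ [k _ <-]; exact: Sn_cross.
have h1 : Sn n s - ee n <= val s by apply: sup_upper_bound => //; exists n.
have h2 : val s <= Sn n s + ee n.
  by apply: ge_sup; [case: hs | move=> _ [k _ <-]; exact: Sn_cross].
have hp : 0 < 2 ^+ n :> R by rewrite exprn_gt0.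
have : `|val s - Sn n s| <= ee n.
  by rewrite ler_norml; apply/andP; split; lra.
by rewrite /ee -[(2 ^+ n)^-1]div1r ler_pdivlMr.
Qed.


Lemma val_tl s : val s = (dd (s 0%N) + val (tl s)) / 2.
Proof.
apply: (Rep_uniq (Rep_val s)); apply/Rep_tl.
have -> : 2 * ((dd (s 0%N) + val (tl s)) / 2) - dd (s 0%N) = val (tl s) by field.
exact: Rep_val.
Qed.

Lemma val_str x : `|x| <= 1 -> val (str x) = x.
Proof. by move=> hx; apply: (Rep_uniq (Rep_val _)); exact: Rep_ex. Qed.

Lemma val_bound s : `|val s| <= 1.
Proof. exact: Rep_bound (Rep_val s). Qed.

Lemma agree_near n (s : cantor_space) :
  \forall s' \near s, forall i, (i < n)%N -> s' i = s i.
Proof.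
elim: n => [|n IH]; first by near=> s' => i.
have := disc_near s (@proj0_cont n).
apply: filterS2 IH => s' h1 h2 i; rewrite ltnS leq_eqVlt => /orP[/eqP->//|]; exact: h1.
Unshelve. all: by end_near. Qed.

Lemma val_cont : continuous val.
Proof.
move=> s; apply/cvgrPdist_lt => eps e0.
have [n hn] := small e0.
apply: filterS (agree_near n s) => s' h.
have e1 : Sn n s' = Sn n s by apply: Sn_pre.
have := Rep_val s n; have := Rep_val s' n; rewrite e1.
have hp : 0 < 2 ^+ n :> R by rewrite exprn_gt0.
have -> : val s - val s' = (val s - Sn n s) - (val s' - Sn n s) by rewrite opprB addrA subrK.
move=> h1 h2; apply: le_lt_trans (ler_normB _ _) _.
rewrite -(ltr_pM2r hp) mulrDl; apply: le_lt_trans (lerD h2 h1) _; lra.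
Qed.

End Streams.
Lemma fst_cont (U V : topologicalType) : continuous (@fst U V).
Proof. by move=> [u v]; exact: cvg_fst. Qed.

Lemma snd_cont (U V : topologicalType) : continuous (@snd U V).
Proof. by move=> [u v]; exact: cvg_snd. Qed.

Lemma pair_cont (Y U V : topologicalType) (f : Y -> U) (g : Y -> V) :
  continuous f -> continuous g -> continuous (fun y => (f y, g y)).
Proof. by move=> hf hg y; exact: cvg_pair (hf y) (hg y). Qed.

Lemma comp_cont (X Y Z : topologicalType) (f : X -> Y) (g : Y -> Z) :
  continuous f -> continuous g -> continuous (fun x => g (f x)).
Proof. by move=> hf hg x; exact: continuous_comp (hf x) (hg (f x)). Qed.

Section Dcont.
Variables (A : topologicalType) (m : A -> A -> A).
Hypothesis mc : continuous (fun z : A * A => m z.1 z.2).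

Lemma dg_cont (Y : topologicalType) (f g : Y -> A) (b : bool) :
  continuous f -> continuous g -> continuous (fun y => dg (f y) (g y) b).
Proof. by case: b. Qed.

Lemma W_cont (Y : topologicalType) (f g : Y -> A) (n : nat) :
  continuous f -> continuous g -> continuous (fun y => W m (f y) (g y) n).
Proof.
move=> hf hg.
by case: n => [|[|[|[|n]]]] //=; repeat apply: (mcont mc).
Qed.
End Dcont.

Section Main.
Variables (R : realType) (P A : topologicalType) (m : A -> A -> A).
Hypotheses (mc : continuous (fun z : A * A => m z.1 z.2)) (midem : forall x, m x x = x)
  (mcom : forall x y, m x y = m y x)
  (mmed : forall x y z w, m (m x y) (m z w) = m (m x z) (m y w))
  (mcan : cancellative m) (mit : iterative m).
Variables (xm1 x1 : P -> A).
Hypotheses (hxm1 : continuous xm1) (hx1 : continuous x1).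

Variable u : P * cantor_space -> A.
Hypothesis uc : continuous u.
Hypothesis ueq : forall p s, u (p, s) = m (dg (xm1 p) (x1 p) (s 0%N)) (u (p, tl s)).

Local Notation Bt := (P * cantor_space * cantor_space * cantor_space * nat)%type.

Definition Inv : set Bt := fun b => exists x y z : R,
  [/\ Rep b.1.1.1.2 x, Rep b.1.1.2 y, Rep b.1.2 z & x + y - 2 * z = 2 * ((b.2)%:R - 2)].

Definition Enext (b : Bt) : nat := (b.1.1.1.2 0%N + b.1.1.2 0%N + 2 - 2 * b.1.2 0%N)%N.

Definition nxb (b : Bt) : Bt :=
  (b.1.1.1.1, tl b.1.1.1.2, tl b.1.1.2, tl b.1.2, (2 * b.2 - Enext b)%N).

Lemma norm_le1 (x : R) : `|x| <= 1 -> -1 <= x /\ x <= 1.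
Proof. by rewrite ler_norml => /andP. Qed.

Lemma Inv_props b : Inv b -> [/\ (b.2 <= 4)%N, (Enext b <= 4)%N,
  (Enext b <= 2 * b.2)%N, (2 * b.2 - Enext b <= 4)%N & Inv (nxb b)].
Proof.
case: b => [[[[p s] t] r] n] [x [y [z [hx hy hz he]]]] /=.
move: hx hy hz he; rewrite /= => hx hy hz he.
have [bx1 bx2] := norm_le1 (Rep_bound hx).
have [by1 by2] := norm_le1 (Rep_bound hy).
have [bz1 bz2] := norm_le1 (Rep_bound hz).
move/Rep_tl: hx => hx; move/Rep_tl: hy => hy; move/Rep_tl: hz => hz.
have [cx1 cx2] := norm_le1 (Rep_bound hx).
have [cy1 cy2] := norm_le1 (Rep_bound hy).
have [cz1 cz2] := norm_le1 (Rep_bound hz).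
have hn4 : (n <= 4)%N by rewrite -(ler_nat R); lra.
have dE (c : bool) : dd R c = 2 * ((c : nat)%:R : R) - 1 /\
    ((0 : R) <= (c : nat)%:R /\ ((c : nat)%:R : R) <= 1).
  by case: c => /=; split; try split; lra.
have hE : (Enext (p, s, t, r, n))%:R = (s 0%N : nat)%:R + (t 0%N : nat)%:R + 2
    - 2 * (r 0%N : nat)%:R :> R.
  have -> : Enext (p, s, t, r, n) = (s 0%N + t 0%N + 2 - 2 * r 0%N)%N by [].
  rewrite natrB; last by case: (r 0%N) => //; case: (s 0%N); case: (t 0%N).
  rewrite !natrD ?mulr0n; lra.
have [ds [es1 es2]] := dE (s 0%N); have [dt [et1 et2]] := dE (t 0%N).
have [dr [er1 er2]] := dE (r 0%N).
rewrite ds in cx1 cx2; rewrite dt in cy1 cy2; rewrite dr in cz1 cz2.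
have h1 : (Enext (p, s, t, r, n) <= 2 * n)%N.
  by rewrite -(ler_nat R) hE natrM; lra.
split => //.
- by rewrite -(ler_nat R) hE; lra.
- by rewrite -(ler_nat R) natrB // natrM hE; lra.
exists (2 * x - dd R (s 0%N)), (2 * y - dd R (t 0%N)), (2 * z - dd R (r 0%N)).
split => //=; rewrite natrB // natrM hE ds dt dr; lra.
Qed.

Definition Cb (b : Bt) : A :=
  m (m (dg (xm1 b.1.1.1.1) (x1 b.1.1.1.1) (b.1.1.1.2 0%N))
       (dg (xm1 b.1.1.1.1) (x1 b.1.1.1.1) (b.1.1.2 0%N)))
    (W m (x1 b.1.1.1.1) (xm1 b.1.1.1.1) (Enext b)).
Definition Lb (b : Bt) : A :=
  m (m (u (b.1.1.1.1, b.1.1.1.2)) (u (b.1.1.1.1, b.1.1.2))) (W m (x1 b.1.1.1.1) (xm1 b.1.1.1.1) b.2).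
Definition Rb (b : Bt) : A :=
  m (u (b.1.1.1.1, b.1.2)) (W m (xm1 b.1.1.1.1) (x1 b.1.1.1.1) b.2).

Lemma L_step b : Inv b -> Lb b = m (Cb b) (Lb (nxb b)).
Proof.
move=> /Inv_props [h1 h2 h3 h4 _].
case: b h1 h2 h3 h4 => [[[[p s] t] r] n] /= h1 h2 h3 h4.
rewrite /Lb /Cb /nxb /= (ueq p s) (ueq p t) (W_step midem mcom mmed _ _ h1 h2 h3 h4).
by rewrite (mmed (dg _ _ _)) mmed.
Qed.

Lemma R_step b : Inv b -> Rb b = m (Cb b) (Rb (nxb b)).
Proof.
move=> /Inv_props [h1 h2 h3 h4 _].
case: b h1 h2 h3 h4 => [[[[p s] t] r] n] /= h1 h2 h3 h4.
rewrite /Rb /Cb /nxb /= (ueq p r) (W_step midem mcom mmed _ _ h1 h2 h3 h4).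
by rewrite mmed /Enext /= (C_eq midem mcom mmed).
Qed.

Lemma Inv_nx b : Inv b -> Inv (nxb b).
Proof. by case/Inv_props. Qed.

Local Notation Xs := (set_type Inv).

Definition nx (b : Xs) : Xs := exist _ (nxb (sval b)) (mem_set (Inv_nx (set_mem (svalP b)))).

Lemma sv_cont : continuous (fun b : Xs => sval b).
Proof. exact: initial_continuous. Qed.

Lemma bp_cont : continuous (fun b : Bt => b.1.1.1.1).
Proof.
apply: (comp_cont (f := fun b : Bt => b.1.1.1)) (@fst_cont _ _).
apply: (comp_cont (f := fun b : Bt => b.1.1)) (@fst_cont _ _).
apply: (comp_cont (f := fun b : Bt => b.1)) (@fst_cont _ _).
exact: fst_cont.
Qed.

Lemma bs_cont : continuous (fun b : Bt => b.1.1.1.2).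
Proof.
apply: (comp_cont (f := fun b : Bt => b.1.1.1)) (@snd_cont _ _).
apply: (comp_cont (f := fun b : Bt => b.1.1)) (@fst_cont _ _).
apply: (comp_cont (f := fun b : Bt => b.1)) (@fst_cont _ _).
exact: fst_cont.
Qed.

Lemma bt_cont : continuous (fun b : Bt => b.1.1.2).
Proof.
apply: (comp_cont (f := fun b : Bt => b.1.1)) (@snd_cont _ _).
apply: (comp_cont (f := fun b : Bt => b.1)) (@fst_cont _ _).
exact: fst_cont.
Qed.

Lemma br_cont : continuous (fun b : Bt => b.1.2).
Proof.
apply: (comp_cont (f := fun b : Bt => b.1)) (@snd_cont _ _).
exact: fst_cont.
Qed.

Lemma bn_cont : continuous (fun b : Bt => b.2).
Proof. exact: snd_cont. Qed.

Lemma bits_near (b : Bt) : \forall b' \near b,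
  (b'.1.1.1.2 0%N, b'.1.1.2 0%N, b'.1.2 0%N, b'.2) = (b.1.1.1.2 0%N, b.1.1.2 0%N, b.1.2 0%N, b.2).
Proof.
have h1 := disc_near b (comp_cont bs_cont (@proj0_cont 0%N)).
have h2 := disc_near b (comp_cont bt_cont (@proj0_cont 0%N)).
have h3 := disc_near b (comp_cont br_cont (@proj0_cont 0%N)).
have h4 := disc_near b bn_cont.
near=> b'.
congr (_, _, _, _); [exact: (near h1 b') | exact: (near h2 b') | exact: (near h3 b')
  | exact: (near h4 b')].
Unshelve. all: by end_near. Qed.

Lemma ubp_cont (f : Bt -> cantor_space) : continuous f -> continuous (fun b => u (b.1.1.1.1, f b)).
Proof. by move=> hf; apply: comp_cont uc; apply: pair_cont => //; exact: bp_cont. Qed.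

Lemma Lb_cont : continuous Lb.
Proof.
apply: (@loc_cont _ _ _ (fun b : Bt => (b.1.1.1.2 0%N, b.1.1.2 0%N, b.1.2 0%N, b.2))
  (fun k b => m (m (u (b.1.1.1.1, b.1.1.1.2)) (u (b.1.1.1.1, b.1.1.2)))
                (W m (x1 b.1.1.1.1) (xm1 b.1.1.1.1) k.2))); [exact: bits_near| |by []].
move=> k; apply: (mcont mc); first by apply: (mcont mc); apply: ubp_cont; [exact: bs_cont|exact: bt_cont].
by apply: (W_cont mc); apply: comp_cont bp_cont _.
Qed.

Lemma Rb_cont : continuous Rb.
Proof.
apply: (@loc_cont _ _ _ (fun b : Bt => (b.1.1.1.2 0%N, b.1.1.2 0%N, b.1.2 0%N, b.2))
  (fun k b => m (u (b.1.1.1.1, b.1.2)) (W m (xm1 b.1.1.1.1) (x1 b.1.1.1.1) k.2)));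
  [exact: bits_near| |by []].
move=> k; apply: (mcont mc); first by apply: ubp_cont; exact: br_cont.
by apply: (W_cont mc); apply: comp_cont bp_cont _.
Qed.

Lemma Cb_cont : continuous Cb.
Proof.
apply: (@loc_cont _ _ _ (fun b : Bt => (b.1.1.1.2 0%N, b.1.1.2 0%N, b.1.2 0%N, b.2))
  (fun k b => m (m (dg (xm1 b.1.1.1.1) (x1 b.1.1.1.1) k.1.1.1)
       (dg (xm1 b.1.1.1.1) (x1 b.1.1.1.1) k.1.1.2))
    (W m (x1 b.1.1.1.1) (xm1 b.1.1.1.1) (k.1.1.1 + k.1.1.2 + 2 - 2 * k.1.2)%N)));
  [exact: bits_near| |by []].
have hx := comp_cont bp_cont hx1; have hm := comp_cont bp_cont hxm1.
move=> k; apply: (mcont mc); first by apply: (mcont mc); exact: dg_cont.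
exact: (W_cont mc).
Qed.

Lemma nxb_cont : continuous nxb.
Proof.
apply: pair_cont; last first.
  apply: (@loc_cont _ _ _ (fun b : Bt => (b.1.1.1.2 0%N, b.1.1.2 0%N, b.1.2 0%N, b.2))
    (fun k b => (2 * k.2 - (k.1.1.1 + k.1.1.2 + 2 - 2 * k.1.2))%N)); [exact: bits_near| |by []].
  by move=> k; exact: cst_continuous.
apply: pair_cont; last by apply: comp_cont br_cont tl_cont.
apply: pair_cont; last by apply: comp_cont bt_cont tl_cont.
apply: pair_cont; last by apply: comp_cont bs_cont tl_cont.
exact: bp_cont.
Qed.

Lemma nx_cont : continuous nx.
Proof.
apply: (@continuous_comp_initial _ _ _ set_val).
exact: (comp_cont sv_cont nxb_cont).
Qed.

Lemma triple p s t r (x y z : R) : Rep s x -> Rep t y -> Rep r z -> x + y = 2 * z ->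
  m (u (p, s)) (u (p, t)) = u (p, r).
Proof.
move=> hx hy hz he.
have hI : Inv (p, s, t, r, 2%N).
  by exists x, y, z; split => //=; lra.
pose c := fun b : Xs => (Cb (sval b), nx b).
have cc : continuous c.
  apply: pair_cont; last exact: nx_cont.
  exact: comp_cont sv_cont Cb_cont.
have [u0 [_ uniq]] := mit cc.
have eL : u0 = fun b : Xs => Lb (sval b).
  apply: uniq; split; first exact: comp_cont sv_cont Lb_cont.
  by apply: funext => b /=; exact: L_step (set_mem (svalP b)).
have eR : u0 = fun b : Xs => Rb (sval b).
  apply: uniq; split; first exact: comp_cont sv_cont Rb_cont.
  by apply: funext => b /=; exact: R_step (set_mem (svalP b)).
have := congr1 (fun f => f (exist _ (p, s, t, r, 2%N) (mem_set hI) : Xs)) (etrans (esym eL) eR).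
rewrite /Lb /Rb /= (mcom (x1 p)) [X in X = _]mcom [X in _ = X]mcom.
exact: mcan.
Qed.

Lemma Ibound (xi : Ipm1 R) : `|sval xi| <= 1.
Proof.
have := set_mem (svalP xi); rewrite /= in_itv /= => /andP[h1 h2].
by rewrite ler_norml h1 h2.
Qed.

Lemma hwd p s (x : R) : Rep s x -> u (p, s) = u (p, str x).
Proof.
move=> hx; have hb := Rep_bound hx.
rewrite -(triple p hx hx (Rep_ex hb)) ?midem //; lra.
Qed.

Definition hh (z : P * Ipm1 R) : A := u (z.1, str (sval z.2)).

Lemma hh_m1 p : hh (p, Ineg1 R) = xm1 p.
Proof.
rewrite /hh /=.
have ef : fstep (-1 : R) = -1 by rewrite /fstep /=; case: lerP => h /=; lra.
have e0 : str (-1 : R) 0%N = false by rewrite /str /=; apply/negP => h; lra.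
have := ueq p (str (-1 : R)); rewrite tl_str ef e0 /= => e.
by apply: (mcan (x := u (p, str (-1 : R)))); rewrite midem [RHS]mcom -e.
Qed.

Lemma hh_1 p : hh (p, Ipos1 R) = x1 p.
Proof.
rewrite /hh /=.
have ef : fstep (1 : R) = 1 by rewrite /fstep /=; case: lerP => h /=; lra.
have e0 : str (1 : R) 0%N = true by rewrite /str /=; lra.
have := ueq p (str (1 : R)); rewrite tl_str ef e0 /= => e.
by apply: (mcan (x := u (p, str (1 : R)))); rewrite midem [RHS]mcom -e.
Qed.

Lemma hh_mid p (x y : Ipm1 R) : hh (p, Imid x y) = m (hh (p, x)) (hh (p, y)).
Proof.
rewrite /hh /=; symmetry; apply: triple; try exact: Rep_ex (Ibound _).
  exact: (Rep_ex (Ibound (Imid x y))).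
by rewrite /=; field.
Qed.

Lemma Isv_cont : continuous (fun xi : Ipm1 R => sval xi).
Proof. exact: initial_continuous. Qed.

Lemma hh_cont : continuous hh.
Proof.
move=> z0 Wn hWn.
have key : \forall z \near z0, forall s, Rep s (sval z.2) -> Wn (u (z.1, s)).
  have := (compact_near_coveringP _).1 cantor_space_compact (P * Ipm1 R)%type (nbhs z0)
    (fun z s => Rep s (sval z.2) -> Wn (u (z.1, s))) _.
  move=> /(_ _) H; apply: filterS (H _) => [z hz s|s _]; first exact: hz.
  have [hr|hnr] := pselect (Rep s (sval z0.2)).
    pose q := fun w : (cantor_space * (P * Ipm1 R))%type => u (w.2.1, w.1).
    have qc : continuous q.
      apply: comp_cont uc; apply: pair_cont; last exact: fst_cont.
      exact: comp_cont (@snd_cont _ _) (@fst_cont _ _).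
    have hq : nbhs (q (s, z0)) Wn.
      by rewrite /q /= (hwd _ hr); exact: hWn.
    have hq' := @qc (s, z0) Wn hq.
    rewrite /prop_near2; apply: (@filterS _ (nbhs (s, z0)) _ _ _ _ hq').
    by move=> [s' z] /= hW _; exact: hW.
  have [n hn] : exists n, ~ (`|sval z0.2 - Sn R n s| * 2 ^+ n <= 1) by apply/existsNP.
  set a := `|sval z0.2 - Sn R n s| in hn.
  have k0 : 0 < 2 ^+ n :> R by rewrite exprn_gt0.
  have ha : 1 < a * 2 ^+ n by rewrite ltNge; apply/negP.
  pose eps := (a * 2 ^+ n - 1) / 2 ^+ n.
  have e0 : 0 < eps by rewrite divr_gt0 // subr_gt0.
  have hc : continuous (fun z : (P * Ipm1 R)%type => sval z.2).
    exact: comp_cont (@snd_cont _ _) Isv_cont.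
  have hz : \forall z \near z0, `|sval z0.2 - sval z.2| < eps.
    by have := @hc z0; rewrite /continuous_at => /cvgr_dist_lt/(_ _ e0).
  have hs := agree_near n s.
  rewrite /prop_near2; exists ([set s' : cantor_space | forall i, (i < n)%N -> s' i = s i],
     [set z : (P * Ipm1 R)%type | `|sval z0.2 - sval z.2| < eps]); first by split.
  move=> [s' z] /= [h1 h2] hr'; exfalso.
  have e1 : Sn R n s' = Sn R n s by apply: Sn_pre.
  have := hr' n; rewrite e1 => hb.
  have tri : a <= `|sval z.2 - Sn R n s| + `|sval z0.2 - sval z.2|.
    rewrite /a; have -> : sval z0.2 - Sn R n s = (sval z.2 - Sn R n s) + (sval z0.2 - sval z.2).
      by ring.
    exact: ler_normD.
  rewrite /eps ltr_pdivlMr // in h2.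
  have tri' := ler_wpM2r (ltW k0) tri; rewrite mulrDl in tri'.
  move: hb h2 tri' ha; set b := `|_ - Sn R n s|; set c := `|_ - sval z.2|.
  set k := 2 ^+ n; move=> *; lra.
apply: filterS key => z hz; apply: hz; exact: Rep_ex (Ibound _).
Qed.

Hypothesis uuniq : forall v : P * cantor_space -> A, continuous v ->
  (forall p s, v (p, s) = m (dg (xm1 p) (x1 p) (s 0%N)) (v (p, tl s))) -> v = u.

Lemma valI_P (s : cantor_space) : val R s \in (`[-1, 1]%classic : set R).
Proof.
apply/mem_set; rewrite /= in_itv /=; have := val_bound R s.
by rewrite ler_norml.
Qed.

Definition valI (s : cantor_space) : Ipm1 R := exist _ (val R s) (valI_P s).

Lemma valI_cont : continuous valI.
Proof.
apply: (@continuous_comp_initial _ _ _ set_val).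
exact: val_cont.
Qed.

Lemma hh_uniq h' : continuous h' ->
  (forall p, h' (p, Ineg1 R) = xm1 p) -> (forall p, h' (p, Ipos1 R) = x1 p) ->
  (forall p x y, h' (p, Imid x y) = m (h' (p, x)) (h' (p, y))) -> hh = h'.
Proof.
move=> hc hm1 h1 hmid.
pose v := fun z : (P * cantor_space)%type => h' (z.1, valI z.2).
have vc : continuous v.
  apply: comp_cont hc; apply: pair_cont; first exact: fst_cont.
  exact: comp_cont (@snd_cont _ _) valI_cont.
have ev : v = u.
  apply: uuniq => // p s; rewrite /v /=.
  have -> : valI s = Imid (if s 0%N then Ipos1 R else Ineg1 R) (valI (tl s)).
    apply: val_inj => /=; rewrite val_tl; by case: (s 0%N).
  rewrite hmid; congr m; by case: (s 0%N).
apply: funext => -[p xi]; rewrite /hh /= -ev /v /=.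
congr h'; congr pair; apply: val_inj => /=; apply: val_str; exact: Ibound.
Qed.

End Main.

Lemma cstep_cont (P A : topologicalType) (xm1 x1 : P -> A) : continuous xm1 -> continuous x1 ->
  continuous (fun z : (P * cantor_space)%type => (dg (xm1 z.1) (x1 z.1) (z.2 0%N), (z.1, tl z.2))).
Proof.
move=> h0 h1; apply: pair_cont.
  apply: (@loc_cont _ _ _ (fun z : (P * cantor_space)%type => z.2 0%N)
    (fun b z => dg (xm1 z.1) (x1 z.1) b)) => //.
    by move=> z; exact: disc_near z (comp_cont (@snd_cont _ _) (@proj0_cont 0%N)).
  by move=> b; apply: dg_cont; exact: comp_cont (@fst_cont _ _) _.
apply: pair_cont; first exact: fst_cont.
exact: comp_cont (@snd_cont _ _) tl_cont.
Qed.

Theorem mainTheorem18 (R : realType) (P A : topologicalType) (m : A -> A -> A)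
  (hA : midpoint_convex_body m) (xm1 x1 : P -> A)
  (hxm1 : continuous xm1) (hx1 : continuous x1) :
  exists! h : P * Ipm1 R -> A,
    [/\ continuous h,
        (forall p : P, h (p, Ineg1 R) = xm1 p),
        (forall p : P, h (p, Ipos1 R) = x1 p) &
        (forall (p : P) (x y : Ipm1 R), h (p, Imid x y) = m (h (p, x)) (h (p, y)))].
Proof.
case: hA => -[mc midem mcom mmed] mcan mit.
have cc := cstep_cont hxm1 hx1.
have [u [[uc ueqf] uuniq]] := mit _ _ cc.
have ueq : forall p s, u (p, s) = m (dg (xm1 p) (x1 p) (s 0%N)) (u (p, tl s)).
  by move=> p s; rewrite {1}ueqf.
have uuniq' : forall v : (P * cantor_space)%type -> A, continuous v ->
    (forall p s, v (p, s) = m (dg (xm1 p) (x1 p) (s 0%N)) (v (p, tl s))) -> v = u.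
  move=> v vc veq; apply/esym/uuniq; split => //.
  by apply: funext => -[p s]; exact: veq.
exists (hh (R := R) u); split.
  split.
  - exact: (hh_cont mc midem mcom mmed mcan mit hxm1 hx1 uc ueq).
  - exact: (hh_m1 R midem mcom mcan ueq).
  - exact: (hh_1 R midem mcom mcan ueq).
  - exact: (hh_mid mc midem mcom mmed mcan mit hxm1 hx1 uc ueq).
move=> h' [h1 h2 h3 h4].
exact: (hh_uniq uuniq' h1 h2 h3 h4).
Qed.
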